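(* Let $r\ge2$ and $n\ge2$. For $0<b<r^n$, the lattice point of the half-open parallelepiped of $\mathcal{B}_{(r,n)}$ indexed by $b$ lies in the open parallelepiped if and only if $r\nmid b$. Consequently \[ \ell^\ast(\mathcal{B}_{(r,n)};z)=h^\ast(\mathcal{B}_{(r,n)};z)-h^\ast(\mathcal{B}_{(r,n-1)};z). \]
   Context: For $r\ge2$, $n\ge1$, let $q^{(r,n)}:=((r-1),(r-1)r,\ldots,(r-1)r^{n-1})$ and $\mathcal{B}_{(r,n)}:=\operatorname{conv}\bigl(e^{(1)},\ldots,e^{(n)},-\sum_{i=1}^n(r-1)r^{i-1}e^{(i)}\bigr)\subset\mathbb{R}^n$ (the base-$r$ $n$-simplex; its normalized volume is $r^n$). Ordering its vertices as $v^{(0)}=-\sum_i (r-1)r^{i-1}e^{(i)}$, $v^{(i)}=e^{(i)}$, the lattice points of the half-open parallelepiped $\{\sum_{i=0}^n\lambda_i(v^{(i)},1):0\le\lambda_i<1\}$ are in bijection with $0\le b<r^n$ via $\lambda_0=b/r^n$. For a lattice simplex $\Delta=\operatorname{conv}(v^{(0)},\ldots,v^{(d)})$, $\ell^\ast(\Delta;z):=\sum_{x\in\Pi^\circ_\Delta\cap\mathbb{Z}^{n+1}}z^{x_{n+1}}$ with $\Pi^\circ_\Delta:=\{\sum\lambda_i(v^{(i)},1):0<\lambda_i<1\}$, and $h^\ast(P;z)$ is the numerator of the Ehrhart series $\sum_{t\ge0}|tP\cap\mathbb{Z}^n|z^t=h^\ast(P;z)/(1-z)^{\dim P+1}$. 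*)

(* Defs.v *)
From HB Require Import structures.
From mathcomp Require Import all_boot all_order all_algebra.
From Stdlib Require Import ClassicalEpsilon.
Set Implicit Arguments. Unset Strict Implicit. Unset Printing Implicit Defensive.
Import Order.TTheory GRing.Theory Num.Theory.
Local Open Scope ring_scope.

Definition pbool (P : Prop) : bool :=
  if excluded_middle_informative P then true else false.

Definition simplex (n : nat) := 'I_n.+1 -> 'I_n -> int.

(* The base-r n-simplex B_(r,n), vertices ordered as v^(0) = -q^(r,n),
   v^(i) = e^(i) (i = 1..n); coordinate j : 'I_n stands for e^(j+1). *)
Definition baseSimplex (r n : nat) : simplex n :=
  fun i j => if val i == 0%N then - (((r - 1) * r ^ (val j))%N)%:Z
             else if val i == (val j).+1 then 1 else 0.

Arguments baseSimplex : clear implicits.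

(* lifted vertex (v^(i), 1) in Z^(n+1); the last coordinate has index n *)
Definition liftv n (v : simplex n) (i : 'I_n.+1) (j : 'I_n.+1) : int :=
  match @insub nat (fun k => (k < n)%N) ('I_n) (val j) with
  | Some k => v i k
  | None => 1
  end.

Definition comb n (v : simplex n) (lam : 'I_n.+1 -> rat) (j : 'I_n.+1) : rat :=
  \sum_(i < n.+1) lam i * (liftv v i j)%:~R.

Definition in_halfopen_with n (v : simplex n) (x : 'I_n.+1 -> int)
  (lam : 'I_n.+1 -> rat) : Prop :=
  (forall i, 0 <= lam i < 1) /\ (forall j, (x j)%:~R = comb v lam j).

Definition in_open n (v : simplex n) (x : 'I_n.+1 -> int) : Prop :=
  exists lam : 'I_n.+1 -> rat,
    (forall i, 0 < lam i < 1) /\ (forall j, (x j)%:~R = comb v lam j).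

Definition maxabs n (v : simplex n) : nat :=
  \max_(i < n.+1) \max_(j < n) absz (v i j).

(* lattice points of Pi^circ are contained in the box [-M, M]^(n+1) *)
Definition boxM n (v : simplex n) : nat := (n.+1 * (maxabs v).+1)%N.

Definition boxpt m (M : nat) (k : {ffun 'I_m -> 'I_(M.*2.+1)}) (j : 'I_m) : int :=
  (val (k j))%:Z - M%:Z.

(* l^*(Delta; z) = sum over lattice points x of Pi^circ of z^(x_(n+1)) *)
Definition lstar n (v : simplex n) : {poly int} :=
  \sum_(k : {ffun 'I_n.+1 -> 'I_((boxM v).*2.+1)})
     if pbool (in_open v (boxpt k)) then 'X^(absz (boxpt k ord_max)) else 0.

Definition in_dilate n (v : simplex n) (t : nat) (x : 'I_n -> int) : Prop :=
  exists mu : 'I_n.+1 -> rat,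
    (forall i, 0 <= mu i) /\ \sum_(i < n.+1) mu i = t%:R /\
    (forall j, (x j)%:~R = \sum_(i < n.+1) mu i * (v i j)%:~R).

(* |t Delta ∩ Z^n|; all such points lie in the box [-t*maxabs, t*maxabs]^n *)
Definition ehr n (v : simplex n) (t : nat) : nat :=
  #|[set k : {ffun 'I_n -> 'I_((t * maxabs v)%N.*2.+1)}
       | pbool (in_dilate v t (boxpt k))]|.

(* h is the h^*-polynomial of the d-dimensional polytope v:
   sum_t ehr t z^t = h(z)/(1-z)^(d+1), written coefficientwise. *)
Definition is_hstar n (v : simplex n) (d : nat) (h : {poly int}) : Prop :=
  forall t : nat,
    (ehr v t)%:Z = \sum_(j < t.+1) h`_j * ('C(t - j + d, d))%:Z.

(* Main.v *)
Require Import Defs.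
From HB Require Import structures.
From mathcomp Require Import all_boot all_order all_algebra.
From mathcomp Require Import zify ring lra.
From Stdlib Require Import ClassicalEpsilon.
Import Order.TTheory GRing.Theory Num.Theory.
Local Open Scope ring_scope.

Set Implicit Arguments. Unset Strict Implicit. Unset Printing Implicit Defensive.

Lemma sum_single (I : finType) (V : nmodType) (Q : pred I) (c : V) :
  (exists x, Q x) -> (forall x y, Q x -> Q y -> x = y) ->
  \sum_(x | Q x) c = c.
Proof.
move=> [x0 Qx0] uQ; rewrite (bigD1 x0) //= big1 ?addr0 // => y /andP[Qy ne].
by move: ne; rewrite (uQ _ _ Qy Qx0) eqxx.
Qed.

Lemma reindex_rel (I Z : finType) (V : nmodType) (P : pred I) (C : pred Z)
  (E : I -> Z -> bool) (w : I -> V) (w' : Z -> V) :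
  (forall i, P i -> exists z, C z && E i z) ->
  (forall i z, C z -> E i z -> P i) ->
  (forall i z1 z2, C z1 -> C z2 -> E i z1 -> E i z2 -> z1 = z2) ->
  (forall z, C z -> exists i, E i z) ->
  (forall i1 i2 z, E i1 z -> E i2 z -> i1 = i2) ->
  (forall i z, E i z -> w i = w' z) ->
  \sum_(i | P i) w i = \sum_(z | C z) w' z.
Proof.
move=> h1 h2 h3 h4 h5 h6.
transitivity (\sum_i \sum_(z | C z && E i z) w i).
  rewrite [RHS](bigID P) /= [X in _ + X]big1 ?addr0; last first.
    move=> i nPi; apply: big1 => z /andP[Cz Eiz].
    by move: nPi; rewrite (h2 _ _ Cz Eiz).
  apply: eq_bigr => i Pi; rewrite sum_single //; first exact: h1.
  by move=> z1 z2 /andP[? ?] /andP[? ?]; apply: (h3 i).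
rewrite (exchange_big_dep C) /=; last by move=> i z _ /andP[].
apply: eq_bigr => z Cz.
rewrite (eq_bigl (fun i => E i z)); last by move=> i; rewrite Cz.
rewrite (eq_bigr (fun _ => w' z)); last by move=> i /h6.
rewrite sum_single //; first exact: h4.
by move=> x y; apply: h5.
Qed.

Lemma maxabs_ge n (v : simplex n) i j : (absz (v i j) <= maxabs v)%N.
Proof.
rewrite /maxabs; apply: leq_trans (leq_bigmax i).
exact: (leq_bigmax (F := fun j => absz (v i j)) j).
Qed.

Lemma boxpt_ex m (N : nat) (x : 'I_m -> int) :
  (forall j, `|x j| <= N%:Z) ->
  exists k : {ffun 'I_m -> 'I_(N.*2.+1)}, forall j, boxpt k j = x j.
Proof.
move=> hx; exists [ffun j => inord (absz (x j + N%:Z))] => j.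
have hv : forall i : nat, (i < N.*2.+1)%N -> val (inord i : 'I_(N.*2.+1)) = i.
  by move=> i hi; exact: inordK.
rewrite /boxpt ffunE hv.
  have := hx j; rewrite ler_norml => /andP[h1 h2].
  by rewrite gez0_abs ?addrK //; lia.
have := hx j; rewrite ler_norml => /andP[h1 h2].
have : (absz (x j + N%:Z))%:Z <= (N.*2)%:Z.
  rewrite gez0_abs; last lia.
  rewrite -muln2 PoszM; lia.
by rewrite lez_nat ltnS.
Qed.

Lemma boxpt_inj m (N : nat) (k1 k2 : {ffun 'I_m -> 'I_(N.*2.+1)}) :
  (forall j, boxpt k1 j = boxpt k2 j) -> k1 = k2.
Proof.
move=> h; apply/ffunP => j; apply: val_inj.
by have := h j; rewrite /boxpt => /addIr /eqP; rewrite eqz_nat => /eqP.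
Qed.

Section Base.
Variable r : nat.
Hypothesis hr : (2 <= r)%N.

Definition Fj m b (j : nat) := ((b * (r-1) * r ^ j) %/ r ^ m)%N.
Definition Gj m b (j : nat) := ((b * (r-1) * r ^ j) %% r ^ m)%N.
Definition ht m b := (b - \sum_(j < m) Fj m b j)%N.

Lemma rpos m : (0 < r ^ m)%N.
Proof. by rewrite expn_gt0; apply/orP; left; lia. Qed.

Lemma geom m : (\sum_(j < m) (r-1) * r ^ j + 1 = r ^ m)%N.
Proof.
elim: m => [|m IH]; first by rewrite big_ord0.
move: IH; rewrite big_ord_recr expnS /=.
set s := \sum_(_ < _) _; set p := (r ^ m)%N => IH; nia.
Qed.

Lemma FG m b j : (b * (r-1) * r ^ j = Fj m b j * r ^ m + Gj m b j)%N.
Proof. exact: divn_eq. Qed.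

Lemma G_lt m b j : (Gj m b j < r ^ m)%N.
Proof. exact: ltn_pmod (rpos m). Qed.

Lemma sumF_le m b : (\sum_(j < m) Fj m b j <= b)%N.
Proof.
rewrite -(leq_pmul2r (rpos m)) big_distrl /=.
apply: (@leq_trans (\sum_(j < m) b * ((r-1) * r ^ j))).
  apply: leq_sum => j _; rewrite mulnA; exact: leq_divM.
rewrite -big_distrr /= leq_mul2l -(geom m); apply/orP; right; exact: leq_addr.
Qed.

Lemma sum_base m (mu : 'I_m.+1 -> rat) (j : 'I_m) :
  \sum_(i < m.+1) mu i * (baseSimplex r m i j)%:~R =
  - mu ord0 * ((r-1) * r ^ j)%N%:R + mu (lift ord0 j).
Proof.
rewrite big_ord_recl /baseSimplex /= mulrNz mulrN mulNr; congr (_ + _).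
rewrite (bigD1 j) //= eqxx mulr1 big1 ?addr0 // => i ne.
have -> : (bump 0 i == j.+1) = false by rewrite /bump add1n eqSS; exact: negbTE.
by rewrite mulr0.
Qed.

Lemma comb_lt m (lam : 'I_m.+1 -> rat) (j : 'I_m) :
  comb (baseSimplex r m) lam (widen_ord (leqnSn m) j) =
  - lam ord0 * ((r-1) * r ^ j)%N%:R + lam (lift ord0 j).
Proof.
rewrite /comb -sum_base; apply: eq_bigr => i _; congr (_ * _%:~R).
rewrite /liftv insubT /=; first exact: ltn_ord.
by move=> h; congr (baseSimplex _ _ _ _); apply: val_inj.
Qed.

Lemma comb_max m (lam : 'I_m.+1 -> rat) :
  comb (baseSimplex r m) lam ord_max = \sum_i lam i.
Proof.
rewrite /comb; apply: eq_bigr => i _; rewrite /liftv insubF /= ?ltnn ?mulr1 //.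
Qed.

End Base.

Unset Implicit Arguments. Set Strict Implicit.

Section Char.
Variable r : nat.
Hypothesis hr : (2 <= r)%N.

Lemma natrz (n : nat) : (n%:R : rat) = (n%:Z)%:~R.
Proof. by []. Qed.

Lemma intr_sum (I : finType) (P : pred I) (F : I -> int) :
  (\sum_(i | P i) F i)%:~R = \sum_(i | P i) (F i)%:~R :> rat.
Proof. by apply: big_morph => [a b|]; rewrite ?intrD. Qed.

Definition wid {m} (j : 'I_m) : 'I_m.+1 := widen_ord (leqnSn m) j.

Lemma halfopen_char m (x : 'I_m.+1 -> int) (lam : 'I_m.+1 -> rat) :
  (forall j, (x j)%:~R = comb (baseSimplex r m) lam j) ->
  lam ord0 * (r ^ m)%N%:R = (x ord_max - \sum_(j < m) x (wid j))%:~R /\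
  (forall j : 'I_m, lam (lift ord0 j) = (x (wid j))%:~R + lam ord0 * ((r-1) * r ^ j)%N%:R).
Proof.
move=> hx.
have h2 : forall j : 'I_m, lam (lift ord0 j) = (x (wid j))%:~R + lam ord0 * ((r-1) * r ^ j)%N%:R.
  by move=> j; rewrite hx /wid comb_lt; ring.
split=> //.
rewrite intrD intrN intr_sum hx comb_max big_ord_recl.
rewrite (eq_bigr _ (fun j _ => h2 j)) big_split /= -mulr_sumr.
rewrite -(geom hr m) natrD -natr_sum.
ring.
Qed.


Lemma Posz_sum (I : finType) (P : pred I) (F : I -> nat) :
  (\sum_(i | P i) F i)%N%:Z = \sum_(i | P i) (F i)%:Z.
Proof. by apply: big_morph => [a b|]; rewrite ?PoszD. Qed.

Definition xpt m b : 'I_m.+1 -> int :=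
  fun j => if (val j < m)%N then - (Fj r m b j)%:Z else (ht r m b)%:Z.

Arguments xpt : clear implicits.

Lemma xpt_wid m b (j : 'I_m) : xpt m b (wid j) = - (Fj r m b j)%:Z.
Proof. by rewrite /xpt /= ltn_ord. Qed.

Lemma xpt_max m b : xpt m b ord_max = (ht r m b)%:Z.
Proof. by rewrite /xpt /= ltnn. Qed.

Lemma xpt_b m b : xpt m b ord_max - \sum_(j < m) xpt m b (wid j) = b%:Z.
Proof.
rewrite xpt_max (eq_bigr _ (fun j _ => xpt_wid m b j)) sumrN opprK -Posz_sum.
have := sumF_le hr m b; rewrite /ht; set s := (\sum_(j < m) Fj r m b j)%N; lia.
Qed.

Lemma eq_on_ord (T : Type) m (f g : 'I_m.+1 -> T) :
  f ord_max = g ord_max -> (forall j : 'I_m, f (wid j) = g (wid j)) ->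
  forall j, f j = g j.
Proof.
move=> hm hw j; case: (ltnP j m) => hj.
  by have -> : j = wid (Ordinal hj) by apply: val_inj.
have -> : j = ord_max by apply: val_inj => /=; have := ltn_ord j; lia.
exact: hm.
Qed.

Lemma pt_char m (x : 'I_m.+1 -> int) (lam : 'I_m.+1 -> rat) :
  (forall j, (x j)%:~R = comb (baseSimplex r m) lam j) ->
  (forall i, 0 <= lam i < 1) ->
  exists b, (b < r ^ m)%N /\ (lam ord0 = b%:R / (r ^ m)%N%:R) /\
            (forall j, x j = xpt m b j).
Proof.
move=> hx hl; have [e h2] := halfopen_char m x lam hx.
set p := (r ^ m)%N in e h2 *; set bz := (_ - _) in e.
have pp : (0 < p)%N by apply: rpos.
have pR : (0 : rat) < p%:R by rewrite ltr0n.
have := hl ord0 => /andP[l0 l1].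
have hb0 : 0 <= bz by rewrite -(ler_int rat) -e; apply: mulr_ge0 => //; exact: ltW.
have hb1 : bz < p%:Z by rewrite -(ltr_int rat) -e -natrz; nra.
pose b := absz bz.
have eb : bz = b%:Z by rewrite /b gez0_abs.
have eb' : lam ord0 * p%:R = b%:R by rewrite e eb.
exists b; split; first by rewrite -ltz_nat -eb.
split; first by rewrite -eb' mulfK // pnatr_eq0 -lt0n.
have hw : forall j : 'I_m, x (wid j) = - (Fj r m b j)%:Z.
  move=> j; have := hl (lift ord0 j) => /andP[a1 a2].
  have et : ((p%:Z * x (wid j) + (b * ((r-1) * r ^ j))%N%:Z)%:~R : rat)
            = p%:R * lam (lift ord0 j).
    by rewrite (h2 j) intrD intrM -!natrz natrM -eb'; ring.
  have t0 : 0 <= p%:Z * x (wid j) + (b * ((r-1) * r ^ j))%N%:Z.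
    by rewrite -(ler_int rat) et; apply: mulr_ge0 => //; exact: ltW.
  have t1 : p%:Z * x (wid j) + (b * ((r-1) * r ^ j))%N%:Z < p%:Z.
    by rewrite -(ltr_int rat) et -natrz; nra.
  move: t0 t1; rewrite mulnA (FG r m b j) -/p.
  have := G_lt hr m b j; rewrite -/p.
  set F := Fj r m b j; set G := Gj r m b j; set y := x (wid j).
  move=> hG t0 t1.
  have hy1 : 0 < p%:Z * (y + F%:Z + 1) by lia.
  have hy2 : 0 < p%:Z * (1 - (y + F%:Z)) by lia.
  rewrite pmulr_rgt0 in hy1; last by rewrite ltz_nat.
  rewrite pmulr_rgt0 in hy2; last by rewrite ltz_nat.
  lia.
apply: eq_on_ord; last by move=> j; rewrite hw xpt_wid.
rewrite xpt_max /ht; move: eb; rewrite /bz (eq_bigr _ (fun j _ => hw j)) sumrN -Posz_sum.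
have := sumF_le hr m b; set s := (\sum_(j < m) Fj r m b j)%N; lia.
Qed.


Definition lampt m b : 'I_m.+1 -> rat :=
  fun i => if val i == 0%N then b%:R / (r ^ m)%N%:R
           else (Gj r m b (val i).-1)%:R / (r ^ m)%N%:R.
Arguments lampt : clear implicits.

Lemma xpt_comb m b j : (xpt m b j)%:~R = comb (baseSimplex r m) (lampt m b) j.
Proof.
have pR : (r ^ m)%N%:R != 0 :> rat by rewrite pnatr_eq0 -lt0n rpos.
move: j; apply: eq_on_ord.
  rewrite xpt_max comb_max big_ord_recl /lampt /= /ht.
  rewrite -natrz natrB; last exact: sumF_le.
  rewrite (eq_bigr (fun j : 'I_m => (Gj r m b j)%:R / (r ^ m)%N%:R)) //.
  rewrite -mulr_suml -natr_sum -mulrDl.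
  apply: (mulIf pR); rewrite mulfVK //.
  have e : forall j, ((Gj r m b j)%:R : rat) =
           b%:R * ((r-1) * r ^ j)%N%:R - (Fj r m b j)%:R * (r ^ m)%N%:R.
    move=> j; have h := congr1 (fun n : nat => n%:R : rat) (FG r m b j); rewrite /= -mulnA natrD (natrM _ b) (natrM _ (Fj _ _ _ _)) in h; lra.
  rewrite !natr_sum (eq_bigr _ (fun (j : 'I_m) _ => e j)) sumrB -mulr_sumr -mulr_suml.
  rewrite -natr_sum -(geom hr m) natrD -natr_sum; ring.
move=> j; rewrite xpt_wid comb_lt /lampt /= intrN -natrz.
have h := congr1 (fun n : nat => n%:R : rat) (FG r m b j).
rewrite /= -mulnA natrD (natrM _ b) (natrM _ (Fj _ _ _ _)) in h.
have -> : ((Gj r m b j)%:R : rat) = b%:R * ((r-1)*r^j)%N%:R - (Fj r m b j)%:R * (r^m)%N%:R by lra.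
by field.
Qed.

Lemma lampt_range m b : (b < r ^ m)%N -> forall i, 0 <= lampt m b i < 1.
Proof.
move=> hb i; have pR : (0 : rat) < (r ^ m)%N%:R by rewrite ltr0n rpos.
rewrite /lampt; case: (_ == _).
  by rewrite divr_ge0 ?ler0n //= ltr_pdivrMr // mul1r ltr_nat.
by rewrite divr_ge0 ?ler0n //= ltr_pdivrMr // mul1r ltr_nat G_lt.
Qed.

Lemma G_pos m b (j : 'I_m) : ~~ (r %| b)%N -> (0 < Gj r m b j)%N.
Proof.
move=> nd; rewrite lt0n; apply/negP => /eqP g0.
move: (FG r m b j); rewrite g0 addn0 => e.
have : (r ^ (m - j) * r ^ j %| b * (r-1) * r ^ j)%N.
  by rewrite -expnD subnK ?(ltnW (ltn_ord j)) // e dvdn_mull.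
rewrite dvdn_pmul2r ?rpos // => h.
have : (r %| b * (r - 1))%N.
  apply: dvdn_trans h; rewrite -{1}(expn1 r) dvdn_exp2l //; have := ltn_ord j; lia.
rewrite mulnC Gauss_dvdr ?(negbTE nd) //.
have -> : (r - 1 = r.-1)%N by lia.
apply: coprimenP; lia.
Qed.

Lemma lampt_pos m b : (0 < b)%N -> ~~ (r %| b)%N -> forall i, 0 < lampt m b i.
Proof.
move=> b0 nd i; have pR : (0 : rat) < (r ^ m)%N%:R by rewrite ltr0n rpos.
rewrite /lampt; case: eqP => hi.
  by rewrite divr_gt0 // ltr0n.
rewrite divr_gt0 // ltr0n.
have hi' : ((val i).-1 < m)%N by case: i hi => [[|k] hk] //= _.
exact: (G_pos m b (Ordinal hi') nd).
Qed.

Lemma open_iff m b x : (0 < m)%N -> (b < r ^ m)%N -> (forall j, x j = xpt m b j) ->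
  in_open (baseSimplex r m) x <-> ~~ (r %| b)%N.
Proof.
case: m x => // m x _ hb hx; split; last first.
  move=> nd; exists (lampt m.+1 b); split.
    move=> i; rewrite lampt_pos //; last by case: b nd {hb hx} => //; rewrite dvdn0.
    by have /andP[_ ->] := lampt_range m.+1 b hb i.
  by move=> j; rewrite hx xpt_comb.
case=> lam [hl he].
have hl' : forall i, 0 <= lam i < 1.
  by move=> i; have /andP[a1 a2] := hl i; rewrite a2 ltW.
have [b' [hb' [e0 hx']]] := pt_char m.+1 x lam he hl'.
have ebb : b' = b.
  have : xpt m.+1 b ord_max - \sum_(j < m.+1) xpt m.+1 b (wid j)
         = xpt m.+1 b' ord_max - \sum_(j < m.+1) xpt m.+1 b' (wid j).
    by rewrite -hx -hx'; congr (_ - _); apply: eq_bigr => j _; rewrite -hx -hx'.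
  by rewrite !xpt_b => -[].
subst b'; apply/negP => /dvdnP [k ek].
have [e h2] := halfopen_char m.+1 x lam he.
have := hl (lift ord0 ord_max) => /andP[]; rewrite (h2 ord_max) e0 ek /=.
have -> : (k * r)%:R / (r ^ m.+1)%N%:R * ((r - 1) * r ^ m)%N%:R
          = ((k * (r - 1))%N%:R : rat).
  have pR : (r ^ m)%N%:R != 0 :> rat by rewrite pnatr_eq0 -lt0n rpos.
  have rR : r%:R != 0 :> rat by rewrite pnatr_eq0; lia.
  rewrite expnSr !natrM; field; by rewrite pR rR.
rewrite natrz -intrD -[0 : rat]/(0%:~R) -[1 : rat]/(1%:~R) !ltr_int; lia.
Qed.

End Char.

Lemma pboolP (P : Prop) : reflect P (pbool P).
Proof. by rewrite /pbool; case: excluded_middle_informative => h; constructor. Qed.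

Lemma open_bound n (v : simplex n) (x : 'I_n.+1 -> int) :
  in_open v x -> forall j, `|x j| <= (boxM v)%:Z.
Proof.
move=> [lam [hl hx]] j.
have hlv : forall i, `|liftv v i j| <= (maxabs v).+1%:Z.
  move=> i; rewrite /liftv; case: insubP => [k _ _|_].
    rewrite -[`|v i k|]abszE lez_nat; apply: leq_trans (maxabs_ge v i k) _; exact: leqnSn.
  by rewrite lez_nat.
rewrite -(ler_int rat) intr_norm hx /comb.
apply: le_trans (ler_norm_sum _ _ _) _.
have -> : ((boxM v)%:Z%:~R : rat) = \sum_(i < n.+1) ((maxabs v).+1)%:R.
  by rewrite sumr_const card_ord -natrz /boxM natrM mulrC mulr_natr.
apply: ler_sum => i _; rewrite normrM.
have /andP[a1 a2] := hl i.
rewrite (gtr0_norm a1) -intr_norm.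
apply: (@le_trans _ _ (1 * (`|liftv v i j|%:~R))).
  by apply: ler_wpM2r; [rewrite ler0z | exact: ltW].
by rewrite mul1r natrz ler_int.
Qed.

Section Main.
Variable r : nat.
Hypothesis hr : (2 <= r)%N.

Lemma part1 n (n0 : (0 < n)%N) (b : nat) : (0 < b < r ^ n)%N ->
     (exists (x : 'I_n.+1 -> int) (lam : 'I_n.+1 -> rat),
        in_halfopen_with (baseSimplex r n) x lam /\
        lam ord0 = b%:R / ((r ^ n)%N)%:R) /\
     (forall (x : 'I_n.+1 -> int) (lam : 'I_n.+1 -> rat),
        in_halfopen_with (baseSimplex r n) x lam ->
        lam ord0 = b%:R / ((r ^ n)%N)%:R ->
        (in_open (baseSimplex r n) x <-> ~~ (r %| b)%N)).
Proof.
move=> /andP[b0 hb]; split.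
  exists (xpt r n b), (lampt r n b); split; last by [].
  split; first exact: lampt_range.
  by move=> j; rewrite xpt_comb.
move=> x lam [hl hx] e.
have [b' [hb' [e' hx']]] := pt_char r hr n x lam hx hl.
have ebb : b' = b.
  move: e; rewrite e' => /(congr1 (fun q => q * ((r ^ n)%N)%:R)).
  have pR : ((r ^ n)%N)%:R != 0 :> rat by rewrite pnatr_eq0 -lt0n rpos.
  by rewrite !mulfVK // => /eqP; rewrite eqr_nat => /eqP.
subst b'; exact: open_iff.
Qed.


Lemma lstar_eq n (n0 : (0 < n)%N) :
  lstar (baseSimplex r n) = \sum_(b < r ^ n | ~~ (r %| b)%N) 'X^(ht r n b).
Proof.
rewrite /lstar -big_mkcond /=.
apply: (reindex_rel (P := fun k => pbool (in_open (baseSimplex r n) (boxpt k)))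
   (C := fun b : 'I_(r ^ n) => ~~ (r %| b)%N)
   (E := fun k b => [forall j, boxpt k j == xpt r n b j])).
- move=> k /pboolP ho; have ho' := ho; case: ho => lam [hl hx].
  have hl' : forall i, 0 <= lam i < 1.
    by move=> i; have /andP[a1 a2] := hl i; rewrite a2 ltW.
  have [b [hb [_ hxb]]] := pt_char r hr n _ lam hx hl'.
  exists (Ordinal hb); apply/andP; split.
    by rewrite -(open_iff r hr n b _ n0 hb hxb).
  by apply/forallP => j; rewrite hxb.
- move=> k b Cb /forallP Ekb; apply/pboolP.
  by rewrite (open_iff r hr n b _ n0 (ltn_ord b)) // => j; apply/eqP.
- move=> k b1 b2 _ _ /forallP E1 /forallP E2; apply: val_inj.
  have h : forall j, xpt r n b1 j = xpt r n b2 j.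
    by move=> j; rewrite -(eqP (E1 j)) (eqP (E2 j)).
  move: (xpt_b r hr n b1); rewrite h (eq_bigr _ (fun j _ => h (wid j))) (xpt_b r hr).
  by move=> -[].
- move=> b Cb.
  have ho : in_open (baseSimplex r n) (xpt r n b).
    by rewrite (open_iff r hr n b _ n0 (ltn_ord b)).
  have [k hk] := boxpt_ex (open_bound _ _ _ ho).
  by exists k; apply/forallP => j; rewrite hk.
- move=> k1 k2 b /forallP E1 /forallP E2; apply: boxpt_inj => j.
  by rewrite (eqP (E1 j)) (eqP (E2 j)).
- by move=> k b /forallP E; rewrite (eqP (E ord_max)) xpt_max.
Qed.


Lemma FjS n b j : Fj r n.+1 (r * b) j = Fj r n b j.
Proof.
rewrite /Fj expnS -!mulnA divnMl //; lia.
Qed.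

Lemma ht_mul n b : ht r n.+1 (r * b) = ht r n b.
Proof.
rewrite /ht big_ord_recr /= (eq_bigr (fun j : 'I_n => Fj r n b j)); last first.
  by move=> j _; rewrite FjS.
have -> : Fj r n.+1 (r * b) n = (b * (r - 1))%N by rewrite FjS /Fj mulnK // rpos.
have := sumF_le hr n b; set s := (\sum_(j < n) Fj r n b j)%N.
have : (r * b = b * (r - 1) + b)%N by nia.
lia.
Qed.

Definition hpoly m : {poly int} := \sum_(b < r ^ m) 'X^(ht r m b).

Lemma hpoly_split n :
  hpoly n.+1 - hpoly n = \sum_(b < r ^ n.+1 | ~~ (r %| b)%N) 'X^(ht r n.+1 b).
Proof.
rewrite /hpoly (bigID (fun b : 'I_(r ^ n.+1) => ~~ (r %| b)%N)) /=.
set A := \sum_(i < r ^ n.+1 | ~~ (r %| i)%N) _.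
suff -> : \sum_(i < r ^ n.+1 | ~~ ~~ (r %| i)%N) 'X^(ht r n.+1 i)
          = \sum_(b < r ^ n) 'X^(ht r n b) :> {poly int} by rewrite addrK.
have r0 : (0 < r)%N by lia.
apply: (reindex_rel (C := fun _ => true)
   (E := fun (b : 'I_(r ^ n.+1)) (b' : 'I_(r ^ n)) => val b == (r * b')%N)).
- move=> b; rewrite negbK => /dvdnP [k ek].
  have hk : (k < r ^ n)%N.
    by rewrite -(ltn_pmul2l r0) -expnS mulnC -ek ltn_ord.
  by exists (Ordinal hk); rewrite /= ek mulnC.
- by move=> b b' _ /eqP ->; rewrite negbK dvdn_mulr.
- move=> b b1 b2 _ _ /eqP ->; rewrite eqn_pmul2l // => /eqP e.
  exact: val_inj.
- move=> b' _.
  have hb : (r * b' < r ^ n.+1)%N by rewrite expnS ltn_pmul2l.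
  by exists (Ordinal hb).
- by move=> b1 b2 b' /eqP e1 /eqP e2; apply: val_inj; rewrite /= e1 e2.
- by move=> b b' /eqP ->; rewrite ht_mul.
Qed.
End Main.

Lemma hockey m K : (\sum_(i < K.+1) 'C(i + m, m) = 'C(K + m.+1, m.+1))%N.
Proof.
elim: K => [|K IH]; first by rewrite big_ord1 add0n !binn.
by rewrite big_ord_recr /= IH [in RHS]addSn binS addSnnS.
Qed.

Lemma hockey2 m t h :
  (\sum_(q < t.+1) (if (q + h <= t)%N then 'C(t - q - h + m, m) else 0%N)
   = if (h <= t)%N then 'C(t - h + m.+1, m.+1) else 0%N)%N.
Proof.
case: leqP => ht; last first.
  by rewrite big1 // => q _; rewrite leqNgt (leq_trans ht) // leq_addl.
have e : t.+1 = ((t - h).+1 + h)%N by lia.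
rewrite e big_split_ord /= [X in (_ + X)%N]big1; last first.
  by move=> q _; rewrite /= ifF //; apply/negbTE; rewrite -ltnNge; lia.
rewrite addn0 -(hockey m (t - h)) (reindex_inj rev_ord_inj) /=.
apply: eq_bigr => i _; have := ltn_ord i => hi; rewrite ifT; [congr 'C(_, _); lia | lia].

Qed.

Lemma regroup (f : nat -> nat) c a :
  (\sum_(D < c * a) f D = \sum_(b < c) \sum_(q < a) f (q * c + b))%N.
Proof.
elim: a => [|a IH].
  by rewrite muln0 big_ord0 big1 // => b _; rewrite big_ord0.
rewrite mulnS addnC big_split_ord /= IH.
rewrite [RHS](eq_bigr (fun b : 'I_c => \sum_(q < a) f (q * c + b) + f (a * c + b))%N); last first.
  by move=> b _; rewrite big_ord_recr.
rewrite big_split /=; congr (_ + _)%N.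
by apply: eq_bigr => b _; rewrite mulnC.
Qed.

Lemma coef_geo (Y K : nat) : (K < Y)%N -> (\sum_(a < Y) 'X^a : {poly int})`_K = 1.
Proof.
move=> hK; rewrite coef_sum (bigD1 (Ordinal hK)) //= coefXn eqxx big1 ?addr0 //.
move=> a ne; rewrite coefXn; case: eqP => // e; case/eqP: ne; exact: val_inj.
Qed.

Lemma coef_prod_geo (Y m K : nat) : (K < Y)%N ->
  (\prod_(j < m.+1) \sum_(a < Y) 'X^a : {poly int})`_K = ('C(K + m, m))%:R.
Proof.
elim: m K => [|m IH] K hK.
  by rewrite big_ord1 coef_geo // addn0 bin0.
rewrite big_ord_recr /= coefM.
rewrite (eq_bigr (fun j : 'I_K.+1 => ('C(j + m, m))%:R)); last first.
  move=> j _; rewrite IH ?coef_geo ?mulr1 //.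
    by apply: leq_ltn_trans hK; rewrite leq_subr.
  by apply: leq_ltn_trans hK; rewrite -ltnS.
by rewrite -natr_sum hockey.
Qed.

Lemma comp_count m (Y K : nat) : (K < Y)%N ->
  (\sum_(y : {ffun 'I_m.+1 -> 'I_Y} | (\sum_j val (y j) == K)%N) 1 = 'C(K + m, m))%N.
Proof.
move=> hK; apply/eqP; rewrite -(eqr_nat int) -(coef_prod_geo Y m K hK).
rewrite bigA_distr_bigA /= coef_sum natr_sum big_mkcond /=; apply/eqP.
apply: eq_bigr => y _; rewrite prodrXr coefXn eq_sym.
by case: (_ == _).
Qed.

Lemma dilate_bound n (v : simplex n) t (x : 'I_n -> int) :
  in_dilate v t x -> forall j, `|x j| <= (t * maxabs v)%N%:Z.
Proof.
move=> [mu [h0 [hs hx]]] j.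
rewrite -(ler_int rat) intr_norm hx.
apply: le_trans (ler_norm_sum _ _ _) _.
rewrite -natrz natrM -hs mulr_suml; apply: ler_sum => i _.
rewrite normrM (ger0_norm (h0 i)) ler_wpM2l // -intr_norm natrz ler_int.
by rewrite lez_nat maxabs_ge.
Qed.

Section Ehr.
Variable r : nat.
Hypothesis hr : (2 <= r)%N.

Lemma dilate_eqs m t (x : 'I_m -> int) (mu : 'I_m.+1 -> rat) :
  (forall j, (x j)%:~R = \sum_(i < m.+1) mu i * (baseSimplex r m i j)%:~R) ->
  \sum_(i < m.+1) mu i = t%:R ->
  mu ord0 * (r ^ m)%N%:R = (t%:Z - \sum_(j < m) x j)%:~R /\
  (forall j, mu (lift ord0 j) = (x j)%:~R + mu ord0 * ((r-1) * r ^ j)%N%:R).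
Proof.
move=> hx hs.
have h2 : forall j, mu (lift ord0 j) = (x j)%:~R + mu ord0 * ((r-1) * r ^ j)%N%:R.
  by move=> j; rewrite hx sum_base; ring.
split=> //.
rewrite intrD intrN intr_sum -natrz -hs big_ord_recl.
rewrite (eq_bigr _ (fun j _ => h2 j)) big_split /= -mulr_sumr.
rewrite -(geom hr m) natrD -natr_sum.
ring.
Qed.

Definition SF m D := (\sum_(j < m) Fj r m D j)%N.

Lemma SF_shift m q b : SF m (q * r ^ m + b) = (q * (r ^ m - 1) + SF m b)%N.
Proof.
rewrite /SF.
rewrite (eq_bigr (fun j : 'I_m => q * ((r - 1) * r ^ j) + Fj r m b j)%N); last first.
  move=> j _; rewrite /Fj.
  have -> : ((q * r ^ m + b) * (r - 1) * r ^ j =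
             (q * ((r - 1) * r ^ j)) * r ^ m + b * (r - 1) * r ^ j)%N by ring.
  by rewrite divnMDl ?rpos.
rewrite big_split /= -big_distrr /=; congr (_ * _ + _)%N.
by rewrite -(geom hr m) addnK.
Qed.

End Ehr.

Section Ehr2.
Variable r : nat.
Hypothesis hr : (2 <= r)%N.
Variables m t : nat.

Definition Dmax := (r ^ m * t.+1)%N.
Definition Ym := (t + Dmax).+1.
Definition Zt := ('I_Dmax * {ffun 'I_m -> 'I_Ym})%type.
Definition Cz (z : Zt) : bool := (t + SF r m z.1 == z.1 + \sum_j val (z.2 j))%N.
Definition gz (z : Zt) : 'I_m -> int := fun j => (val (z.2 j))%:Z - (Fj r m z.1 j)%:Z.

Lemma gz_sum z : Cz z -> \sum_j gz z j = t%:Z - (val z.1)%:Z.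
Proof.
rewrite /Cz /gz sumrB -!Posz_sum => /eqP.
set s1 := (\sum_(j < m) val (z.2 j))%N.
set s2 := (\sum_(j < m) Fj r m z.1 j)%N.
have -> : SF r m z.1 = s2 by [].
change (val z.1) with (nat_of_ord z.1); lia.
Qed.

Lemma gz_uniq z1 z2 : Cz z1 -> Cz z2 -> (forall j, gz z1 j = gz z2 j) -> z1 = z2.
Proof.
move=> c1 c2 h.
have eD : z1.1 = z2.1.
  apply: val_inj; have := gz_sum z1 c1; have := gz_sum z2 c2.
  rewrite -(eq_bigr _ (fun j _ => h j)) => -> e; lia.

case: z1 z2 c1 c2 h eD => [D1 y1] [D2 y2] /= c1 c2 h eD; subst D2.
congr (_, _); apply/ffunP => j; apply: val_inj.
by have := h j; rewrite /gz /= => /addIr [].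
Qed.


Lemma FG_rat D j : (D%:R / (r ^ m)%N%:R * ((r-1) * r ^ j)%N%:R : rat) =
   (Fj r m D j)%:R + (Gj r m D j)%:R / (r ^ m)%N%:R.
Proof.
have pR : (r ^ m)%N%:R != 0 :> rat by rewrite pnatr_eq0 -lt0n rpos.
have h := congr1 (fun n : nat => n%:R : rat) (FG r m D j).
rewrite /= -mulnA natrD (natrM _ D) (natrM _ (Fj _ _ _ _)) in h.
rewrite mulrAC h; field; exact: pR.
Qed.

Lemma gz_dilate z (x : 'I_m -> int) : Cz z -> (forall j, x j = gz z j) ->
  in_dilate (baseSimplex r m) t x.
Proof.
move=> cz hx; set D := val z.1.
have pR : (r ^ m)%N%:R != 0 :> rat by rewrite pnatr_eq0 -lt0n rpos.
pose mu : 'I_m.+1 -> rat := fun i => if unlift ord0 i is Some j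
  then (gz z j)%:~R + D%:R / (r ^ m)%N%:R * ((r-1) * r ^ j)%N%:R
  else D%:R / (r ^ m)%N%:R.
have m0 : mu ord0 = D%:R / (r ^ m)%N%:R by rewrite /mu unlift_none.
have ml : forall j, mu (lift ord0 j) =
   (gz z j)%:~R + D%:R / (r ^ m)%N%:R * ((r-1) * r ^ j)%N%:R.
  by move=> j; rewrite /mu liftK.
exists mu; split; [|split].
- move=> i; case: (unliftP ord0 i) => [j|] ->; last first.
    by rewrite m0 divr_ge0 ?ler0n.
  rewrite ml FG_rat /gz intrD intrN -!natrz.
  have : (0 : rat) <= (Gj r m D j)%:R / (r ^ m)%N%:R by rewrite divr_ge0 ?ler0n.
  have : (0 : rat) <= (val (z.2 j))%:R by rewrite ler0n.
  lra.
- rewrite big_ord_recl m0 (eq_bigr _ (fun j _ => ml j)) big_split /= -mulr_sumr.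
  rewrite -intr_sum gz_sum // intrD intrN -!natrz.
  rewrite -natr_sum.
  have e := geom hr m; move/(congr1 (fun n : nat => n%:R : rat)): e.
  rewrite /= natrD => e.
  have hS : ((\sum_(i < m) (r - 1) * r ^ i)%N%:R : rat) = (r ^ m)%N%:R - 1 by lra.
  rewrite hS; change (nat_of_ord z.1) with D; field; exact: pR.
- move=> j; rewrite hx sum_base m0 ml; ring.
Qed.


Lemma le_sum_elem (I : finType) (f : I -> int) (j0 : I) :
  (forall j, 0 <= f j) -> f j0 <= \sum_j f j.
Proof.
move=> h; rewrite (bigD1 j0) //= lerDl; apply: sumr_ge0 => j _; exact: h.
Qed.

Lemma dilate_to_z (x : 'I_m -> int) : in_dilate (baseSimplex r m) t x ->
  exists z, Cz z /\ (forall j, x j = gz z j).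
Proof.
move=> [mu [h0 [hs hx]]]; have [e h2] := dilate_eqs r hr m t x mu hx hs.
set p := (r ^ m)%N in e h2 *; set Dz := (_ - _) in e.
have pp : (0 < p)%N by apply: rpos.
have pR : (0 : rat) < p%:R by rewrite ltr0n.
have hD0 : 0 <= Dz by rewrite -(ler_int rat) -e; apply: mulr_ge0 => //.
have mu0t : mu ord0 <= t%:R.
  rewrite -hs big_ord_recl lerDl; apply: sumr_ge0 => i _; exact: h0.
have hD1 : Dz <= (p * t)%N%:Z.
  rewrite -(ler_int rat) -e -natrz natrM mulrC; apply: ler_wpM2l => //; exact: ltW.
pose D := absz Dz.
have eD : Dz = D%:Z by rewrite /D gez0_abs.
have eD' : mu ord0 * p%:R = D%:R by rewrite e eD.
have hD : (D < Dmax)%N.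
  rewrite /Dmax -/p; move: hD1; rewrite eD lez_nat => h.
  by apply: leq_ltn_trans h _; rewrite ltn_pmul2l.
have hy0 : forall j, 0 <= x j + (Fj r m D j)%:Z.
  move=> j; have a1 := h0 (lift ord0 j).
  have et : ((p%:Z * x j + (D * ((r-1) * r ^ j))%N%:Z)%:~R : rat)
            = p%:R * mu (lift ord0 j).
    by rewrite (h2 j) intrD intrM -!natrz natrM -eD'; ring.
  have t0 : 0 <= p%:Z * x j + (D * ((r-1) * r ^ j))%N%:Z.
    by rewrite -(ler_int rat) et; apply: mulr_ge0 => //; exact: ltW.
  move: t0; rewrite mulnA (FG r m D j) -/p.
  have := G_lt hr m D j; rewrite -/p.
  set F := Fj r m D j; set G := Gj r m D j; set y := x j.
  move=> hG t0.
  have hy1 : 0 < p%:Z * (y + F%:Z + 1) by lia.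
  rewrite pmulr_rgt0 in hy1; last by rewrite ltz_nat.
  lia.
have hsum : \sum_j (x j + (Fj r m D j)%:Z) = t%:Z - D%:Z + (SF r m D)%:Z.
  by rewrite big_split /= /SF Posz_sum -eD /Dz; congr (_ + _); ring.
have hSF := sumF_le hr m D.
have hy : forall j, (absz (x j + (Fj r m D j)%:Z)%R < Ym)%N.
  move=> j; rewrite -ltz_nat gez0_abs ?hy0 //.
  apply: le_lt_trans (le_sum_elem _ _ j hy0) _.
  rewrite hsum /Ym /Dmax -/p; move: hD; rewrite /Dmax -/p.
  rewrite /SF in hSF *; set s := (\sum_(j < m) Fj r m D j)%N in hSF *; lia.
exists (Ordinal hD, [ffun j => Ordinal (hy j)]); split.
  rewrite /Cz /=.
  have e2 : (\sum_j val ([ffun j => Ordinal (hy j)] j))%N%:Z =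
            \sum_j (x j + (Fj r m D j)%:Z).
    by rewrite Posz_sum; apply: eq_bigr => j _; rewrite ffunE /= gez0_abs ?hy0.
  move: e2; rewrite hsum; rewrite /SF in hSF *.
  set s := (\sum_(j < m) Fj r m D j)%N in hSF *.
  set s2 := (\sum_j _)%N; move=> e2; apply/eqP; lia.
move=> j; rewrite /gz /= ffunE /= gez0_abs ?hy0 //; lia.
Qed.

End Ehr2.

Section Ehr3.
Variable r : nat.
Hypothesis hr : (2 <= r)%N.

Lemma ehr_Z m t :
  ehr (baseSimplex r m) t = (\sum_(z : Zt r m t | Cz r m t z) 1)%N.
Proof.
rewrite /ehr -sum1_card.
rewrite (eq_bigl (fun k => pbool (in_dilate (baseSimplex r m) t (boxpt k)))); last first.
  by move=> k; rewrite inE.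
apply: (reindex_rel (P := fun k => pbool (in_dilate (baseSimplex r m) t (boxpt k)))
   (C := Cz r m t) (E := fun k z => [forall j, boxpt k j == gz r m t z j])).
- move=> k /pboolP hd; have [z [cz hz]] := dilate_to_z r hr m t _ hd.
  by exists z; rewrite cz /=; apply/forallP => j; rewrite hz.
- move=> k z cz /forallP E; apply/pboolP; apply: (gz_dilate r hr m t z) => //.
  by move=> j; apply/eqP.
- move=> k z1 z2 c1 c2 /forallP E1 /forallP E2; apply: (gz_uniq r hr m t) => // j.
  by rewrite -(eqP (E1 j)) (eqP (E2 j)).
- move=> z cz.
  have hd : in_dilate (baseSimplex r m) t (gz r m t z) by apply: (gz_dilate r hr m t z).
  have [k hk] := boxpt_ex (dilate_bound _ _ _ _ hd).
  by exists k; apply/forallP => j; rewrite hk.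
- move=> k1 k2 z /forallP E1 /forallP E2; apply: boxpt_inj => j.
  by rewrite (eqP (E1 j)) (eqP (E2 j)).
- by [].
Qed.


Lemma ehr_count m t :
  ehr (baseSimplex r m.+1) t =
  (\sum_(b < r ^ m.+1) (if (ht r m.+1 b <= t)%N then 'C(t - ht r m.+1 b + m.+1, m.+1) else 0))%N.
Proof.
rewrite ehr_Z.
set M := m.+1.
transitivity (\sum_(D < Dmax r M t)
   \sum_(y : {ffun 'I_M -> 'I_(Ym r M t)} | (t + SF r M D == D + \sum_j val (y j))%N) 1)%N.
  by rewrite pair_big_dep /=.
transitivity (\sum_(D < Dmax r M t)
   (if (D <= t + SF r M D)%N then 'C(t + SF r M D - D + m, m) else 0))%N.
  apply: eq_bigr => D _; have hSF := sumF_le hr M D; rewrite /SF in hSF *.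
  set s := (\sum_(j < M) Fj r M D j)%N in hSF *.
  case: leqP => hD.
    rewrite (eq_bigl (fun y : {ffun 'I_M -> 'I_(Ym r M t)} =>
                       (\sum_j val (y j) == t + s - D)%N)); last first.
      by move=> y; apply/eqP/eqP; lia.
    apply: comp_count; rewrite /Ym.
    have := ltn_ord D; lia.
  by apply: big1 => y /eqP; lia.
rewrite (regroup (fun D => if (D <= t + SF r M D)%N then 'C(t + SF r M D - D + m, m) else 0%N) (r ^ M) t.+1).
apply: eq_bigr => b _.
rewrite -hockey2; apply: eq_bigr => q _.
move: (nat_of_ord b) (nat_of_ord q) => {}b {}q.
rewrite (SF_shift r hr).
have pp := rpos hr M.
set p := (r ^ M)%N in pp *.
have hq : (q * p = q * (p - 1) + q)%N by rewrite -{1}(subnK pp) mulnDr muln1.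
have hSF := sumF_le hr M b; rewrite /ht.
rewrite /SF in hSF *.
set s := (\sum_(j < M) Fj r M b j)%N in hSF *.
set A := (q * (p - 1))%N in hq *; set Q := (q * p)%N in hq *.
case: leqP => h1; case: leqP => h2; try lia.
congr 'C(_, _); lia.
Qed.


Lemma sum_delta (N h : nat) (c : nat -> int) :
  \sum_(j < N) (((j : nat) == h)%:R * c j) = if (h < N)%N then c h else 0.
Proof.
case: ltnP => hN.
  rewrite (bigD1 (Ordinal hN)) //= eqxx mul1r big1 ?addr0 // => j ne.
  case: eqP => e; last by rewrite mul0r.
  by case/eqP: ne; apply: val_inj.
apply: big1 => j _; case: eqP => e; last by rewrite mul0r.
by have := ltn_ord j; rewrite e; lia.
Qed.

Lemma hstar_base m : is_hstar (baseSimplex r m.+1) m.+1 (hpoly r m.+1).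
Proof.
move=> t; rewrite ehr_count Posz_sum.
rewrite (eq_bigr (fun j : 'I_t.+1 => \sum_(b < r ^ m.+1)
   (((j : nat) == ht r m.+1 b)%:R * ('C(t - j + m.+1, m.+1))%:Z))); last first.
  by move=> j _; rewrite /hpoly coef_sum mulr_suml; apply: eq_bigr => b _; rewrite coefXn.
rewrite exchange_big /=; apply: eq_bigr => b _.
rewrite (sum_delta t.+1 (ht r m.+1 b) (fun j => ('C(t - j + m.+1, m.+1))%:Z)) ltnS.
by case: ifP.
Qed.

End Ehr3.

Theorem mainTheorem6 (r n : nat) (hr : (2 <= r)%N) (hn : (2 <= n)%N) :
  (forall b : nat, (0 < b < r ^ n)%N ->
     (exists (x : 'I_n.+1 -> int) (lam : 'I_n.+1 -> rat),
        in_halfopen_with (baseSimplex r n) x lam /\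
        lam ord0 = b%:R / ((r ^ n)%N)%:R) /\
     (forall (x : 'I_n.+1 -> int) (lam : 'I_n.+1 -> rat),
        in_halfopen_with (baseSimplex r n) x lam ->
        lam ord0 = b%:R / ((r ^ n)%N)%:R ->
        (in_open (baseSimplex r n) x <-> ~~ (r %| b)%N)))
  /\
  (exists h1 h2 : {poly int},
     is_hstar (baseSimplex r n) n h1 /\
     is_hstar (baseSimplex r n.-1) n.-1 h2 /\
     lstar (baseSimplex r n) = h1 - h2).
Proof.
have n0 : (0 < n)%N by lia.
split.
  by move=> b hb; exact: (part1 r hr n n0 b hb).
case: n hn n0 => [|n'] // hn n0.
exists (hpoly r n'.+1), (hpoly r n').
split; first exact: (hstar_base r hr n').
split.
  case: n' hn n0 => [|n''] // hn n0.
  exact: (hstar_base r hr n'').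
by rewrite (lstar_eq r hr n'.+1 n0) (hpoly_split r hr n').
Qed.
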